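(* Each of the logics $\mathbf{K4}_h$, $\mathbf{KD4}_h$, $\mathbf{S4}_h$ and $\mathbf{GL}_h$ has the strong disjunction property: for $L$ any of these logics and any formulas $\Box_nA$, $\Box_mB$ of $\mathcal{L}_\infty$, if $L\vdash\Box_nA\vee\Box_mB$ then $L\vdash A$ or $L\vdash B$.
   Context: The language $\mathcal{L}_\infty$ consists of modal formulas built from propositional atoms, $\bot,\top$, the connectives $\neg,\wedge,\vee,\rightarrow$ and unary modalities $\Box_n$ ($n\in\mathbb{N}$), with the restriction that $\Box_n A$ is a formula only if $n$ is strictly greater than the index of every box occurring in $A$. Axiom instances are only those that are $\mathcal{L}_\infty$-formulas. Axiom schemes (for all $n\ge0$): $\mathbf{H}$: $\Box_n A\rightarrow\Box_{n+1}A$; $\mathbf{K}_h$: $\Box_n(A\rightarrow B)\rightarrow(\Box_nA\rightarrow\Box_nB)$; $\mathbf{4}_h$: $\Box_nA\rightarrow\Box_{n+1}\Box_nA$; $\mathbf{D}_h$: $\neg\Box_n\bot$; $\mathbf{L}_h$: $\Box_{n+1}(\Box_nA\rightarrow A)\rightarrow\Box_nA$; $\mathbf{T}_h$: $\Box_nA\rightarrow A$. For a set $X$ of schemes, $L(X)$ is the least set of $\mathcal{L}_\infty$-formulas containing all classical propositional tautologies and all instances of the schemes in $X$, closed under modus ponens and the rule: from $A$ infer $\Box_nA$ for any $n$ greater than all box indices in $A$. $\mathbf{K4}_h=L(\mathbf{H},\mathbf{K}_h,\mathbf{4}_h)$, $\mathbf{KD4}_h=L(\mathbf{H},\mathbf{K}_h,\mathbf{4}_h,\mathbf{D}_h)$,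 $\mathbf{S4}_h=L(\mathbf{H},\mathbf{K}_h,\mathbf{4}_h,\mathbf{T}_h)$, $\mathbf{GL}_h=L(\mathbf{H},\mathbf{K}_h,\mathbf{4}_h,\mathbf{L}_h)$. *)

(* Defs.v *)
From Stdlib Require Import Arith.

(* Raw modal formulas; well-formedness (membership in L_infty) is a separate predicate. *)
Inductive form : Type :=
  | Var : nat -> form
  | Bot : form
  | Top : form
  | Neg : form -> form
  | And : form -> form -> form
  | Or  : form -> form -> form
  | Imp : form -> form -> form
  | Box : nat -> form -> form.

Fixpoint boxes_below (n : nat) (A : form) : Prop :=
  match A with
  | Var _ | Bot | Top => True
  | Neg B => boxes_below n B
  | And B C | Or B C | Imp B C => boxes_below n B /\ boxes_below n C
  | Box k B => k < n /\ boxes_below n B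
  end.

Fixpoint wf (A : form) : Prop :=
  match A with
  | Var _ | Bot | Top => True
  | Neg B => wf B
  | And B C | Or B C | Imp B C => wf B /\ wf C
  | Box n B => boxes_below n B /\ wf B
  end.

Fixpoint peval (v : form -> bool) (A : form) : bool :=
  match A with
  | Var _ => v A
  | Bot => false
  | Top => true
  | Neg B => negb (peval v B)
  | And B C => andb (peval v B) (peval v C)
  | Or B C => orb (peval v B) (peval v C)
  | Imp B C => implb (peval v B) (peval v C)
  | Box _ _ => v A
  end.

Definition tautology (A : form) : Prop := forall v, peval v A = true.

Inductive scheme : Type := SH | SK | S4 | SD | SL | ST.

Definition instance (s : scheme) (F : form) : Prop :=
  match s with
  | SH => exists n A, F = Imp (Box n A) (Box (S n) A)
  | SK => exists n A B, F = Imp (Box n (Imp A B)) (Imp (Box n A) (Box n B))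
  | S4 => exists n A, F = Imp (Box n A) (Box (S n) (Box n A))
  | SD => exists n, F = Neg (Box n Bot)
  | SL => exists n A, F = Imp (Box (S n) (Imp (Box n A) A)) (Box n A)
  | ST => exists n A, F = Imp (Box n A) A
  end.

Inductive prov (X : scheme -> Prop) : form -> Prop :=
  | prov_taut : forall A, wf A -> tautology A -> prov X A
  | prov_ax : forall s A, X s -> wf A -> instance s A -> prov X A
  | prov_mp : forall A B, prov X A -> prov X (Imp A B) -> prov X B
  | prov_nec : forall n A, prov X A -> boxes_below n A -> prov X (Box n A).

Inductive logic : Type := K4h | KD4h | S4h | GLh.

Definition schemes_of (L : logic) (s : scheme) : Prop :=
  match L with
  | K4h => s = SH \/ s = SK \/ s = S4
  | KD4h => s = SH \/ s = SK \/ s = S4 \/ s = SD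
  | S4h => s = SH \/ s = SK \/ s = S4 \/ s = ST
  | GLh => s = SH \/ s = SK \/ s = S4 \/ s = SL
  end.

Definition derivable (L : logic) (A : form) : Prop := prov (schemes_of L) A.

(* Main.v *)
Require Import Defs.
From Stdlib Require Import Classical ClassicalDescription.

Fixpoint tr (L : logic) (R : Prop) (F : form) : Prop :=
  match F with
  | Var _ => False
  | Bot => False
  | Top => True
  | Neg B => ~ tr L R B
  | And B C => tr L R B /\ tr L R C
  | Or B C => tr L R B \/ tr L R C
  | Imp B C => tr L R B -> tr L R C
  | Box _ B => derivable L B /\ (R -> tr L R B)
  end.

Definition vv L R (F : form) : bool :=
  if excluded_middle_informative (tr L R F) then true else false.

Lemma vv_ok L R F : peval (vv L R) F = true <-> tr L R F.
Proof.
  induction F; simpl;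
  try (unfold vv; destruct excluded_middle_informative as [h|h]; simpl in *; intuition congruence).
  - intuition congruence.
  - intuition.
  - destruct (peval (vv L R) F); simpl; intuition congruence.
  - destruct (peval (vv L R) F1), (peval (vv L R) F2); simpl; intuition congruence.
  - destruct (peval (vv L R) F1), (peval (vv L R) F2); simpl; intuition congruence.
  - destruct (peval (vv L R) F1), (peval (vv L R) F2); simpl; intuition congruence.
Qed.

Definition RR (L : logic) : Prop := L <> GLh.

Lemma sound L F : derivable L F -> tr L (RR L) F.
Proof.
  unfold derivable. induction 1.
  - apply vv_ok. apply H0.
  - destruct s; simpl in H1.
    + destruct H1 as [n [a ->]]. simpl. tauto.
    + destruct H1 as [n [a [b ->]]]. simpl. intros [h1 h2] [h3 h4].
      split; [eapply prov_mp; eauto | tauto].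
    + destruct H1 as [n [a ->]]. simpl in *. intros [h1 h2].
      split; [apply (prov_nec _ n a h1); tauto | tauto].
    + destruct H1 as [n ->]. simpl.
      assert (RL : L <> GLh) by (destruct L; simpl in H; intuition discriminate).
      unfold RR; tauto.
    + destruct H1 as [n [a ->]]. simpl in *.
      assert (RL : L = GLh) by (destruct L; simpl in H; intuition discriminate).
      subst L. unfold RR. intros [h1 _].
      assert (hb : prov (schemes_of GLh) (Box n a)).
      { eapply prov_mp. apply (prov_nec _ (S n)). exact h1. simpl; tauto.
        apply prov_ax with SL. simpl; tauto. simpl; tauto. simpl; eauto. }
      split; [eapply prov_mp; eauto | congruence].
    + destruct H1 as [n [a ->]]. simpl in *.
      assert (RL : L <> GLh) by (destruct L; simpl in H; intuition discriminate).
      intros [_ h]. tauto.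
  - simpl in IHprov2. tauto.
  - simpl. tauto.
Qed.

Theorem theorem3p15 :
  forall (L : logic) (n m : nat) (A B : form),
    wf (Box n A) -> wf (Box m B) ->
    derivable L (Or (Box n A) (Box m B)) ->
    derivable L A \/ derivable L B.
Proof.
  intros L n m A B _ _ H. apply sound in H. simpl in H. tauto.
Qed.
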